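(* Let $\alpha:R\to R'$ be a Jordan homomorphism of rings and let $T=(t_1,\ldots,t_n)\in R^n$, $n\geq 0$; write $T^\alpha=(t_1^\alpha,\ldots,t_n^\alpha)$. Then: (a) if $e^{(n)}(T)\in R^*$ then $e^{(n)}(T^\alpha)\in R'^*$; (b) if $e^{(n)}(T)\in R^*$ and $e^{(n-1)}(T)=0$ then $e^{(n-1)}(T^\alpha)=0'$.
   Context: Rings are associative with $1$; $R^*$ denotes the group of units. A Jordan homomorphism $\alpha:R\to R'$ is a map with $(a+b)^\alpha=a^\alpha+b^\alpha$, $1^\alpha=1'$, $(aba)^\alpha=a^\alpha b^\alpha a^\alpha$ for all $a,b\in R$. Let $\mathbb{Z}\langle X\rangle$ be the free $\mathbb{Z}$-algebra on non-commuting indeterminates $x_1,x_2,\ldots$; define $e^{(-2)}:=-1$, $e^{(-1)}:=0$, $e^{(0)}:=1$, $e^{(n)}:=e^{(n-1)}x_n-e^{(n-2)}$ for $n\geq1$. For a finite sequence $S=(s_1,\ldots,s_m)$ in a ring, $e^{(k)}(S)$ is the image of $e^{(k)}$ under $x_i\mapsto s_i$ ($i\leq m$), $x_i\mapsto 0$ ($i>m$); in particular $e^{(n-1)}(T)=e^{(n-1)}(t_1,\ldots,t_{n-1})$. *)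

(* Defs.v *)
From HB Require Import structures.
From mathcomp Require Import all_boot all_order all_algebra.
Set Implicit Arguments. Unset Strict Implicit. Unset Printing Implicit Defensive.
Import GRing.Theory.
Local Open Scope ring_scope.

(* Rings: associative with 1, not necessarily commutative, possibly the zero
   ring: MathComp's pzRingType. *)

Definition is_unit (R : pzRingType) (a : R) : Prop :=
  exists b : R, a * b = 1 /\ b * a = 1.

Definition jordan_hom (R R' : pzRingType) (f : R -> R') : Prop :=
  [/\ forall a b, f (a + b) = f a + f b,
      f 1 = 1 &
      forall a b, f (a * b * a) = f a * f b * f a].

(* e_pair s n = (e^{(n-1)}(s), e^{(n)}(s)) where s = (s_1,...,s_m) is a list,
   x_i |-> s_i for i <= m and x_i |-> 0 for i > m (nth 0 s (i-1) = s_i). *)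
Fixpoint e_pair (R : pzRingType) (s : seq R) (n : nat) : R * R :=
  match n with
  | 0 => (0, 1)
  | n'.+1 => let: (a, b) := e_pair s n' in (b, b * nth 0 s n' - a)
  end.

Definition e_poly (R : pzRingType) (s : seq R) (n : nat) : R := (e_pair s n).2.
(* e^{(n-1)}(s) for n >= 0 (so e_poly_pred s 0 = e^{(-1)} = 0) *)
Definition e_poly_pred (R : pzRingType) (s : seq R) (n : nat) : R := (e_pair s n).1.

(* Main.v *)
Require Import Defs.
From HB Require Import structures.
From mathcomp Require Import all_boot all_order all_algebra.
Import GRing.Theory.
Local Open Scope ring_scope.
Set Implicit Arguments. Unset Strict Implicit.

Section Mat.
Variable R : pzRingType.
Definition i0 : 'I_2 := ord0.
Definition i1 : 'I_2 := ord_max.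

Lemma ord2P (i : 'I_2) : i = i0 \/ i = i1.
Proof. case: i => [[|[|//]]] H; [left|right]; exact: val_inj. Qed.

Definition mk2 (a b c d : R) : 'M[R]_2 :=
  \matrix_(i < 2, j < 2)
    if i == i0 then (if j == i0 then a else b) else (if j == i0 then c else d).

Lemma mk2E00 a b c d : mk2 a b c d i0 i0 = a. Proof. by rewrite mxE. Qed.
Lemma mk2E01 a b c d : mk2 a b c d i0 i1 = b. Proof. by rewrite mxE. Qed.
Lemma mk2E10 a b c d : mk2 a b c d i1 i0 = c. Proof. by rewrite mxE. Qed.
Lemma mk2E11 a b c d : mk2 a b c d i1 i1 = d. Proof. by rewrite mxE. Qed.

Lemma mk2E (A : 'M[R]_2) : A = mk2 (A i0 i0) (A i0 i1) (A i1 i0) (A i1 i1).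
Proof.
apply/matrixP => i j; rewrite mxE.
by case: (ord2P i) => ->; case: (ord2P j) => ->.
Qed.

Lemma mulE (A B : 'M[R]_2) i j : (A *m B) i j = A i i0 * B i0 j + A i i1 * B i1 j.
Proof.
rewrite mxE big_ord_recl big_ord1.
have -> : lift ord0 ord0 = i1 by exact: val_inj.
by [].
Qed.

Lemma mulmk2 a b c d a' b' c' d' :
  mk2 a b c d *m mk2 a' b' c' d' =
  mk2 (a * a' + b * c') (a * b' + b * d') (c * a' + d * c') (c * b' + d * d').
Proof.
apply/matrixP => i j; rewrite mulE !mxE.
by case: (ord2P i) => ->; case: (ord2P j) => ->.
Qed.

Lemma mk2_1 : (1%:M : 'M[R]_2) = mk2 1 0 0 1.
Proof.
apply/matrixP => i j; rewrite !mxE.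
by case: (ord2P i) => ->; case: (ord2P j) => ->.
Qed.

End Mat.
Arguments mk2 {R}.
Ltac simp := rewrite ?(mul0r, mulr0, mul1r, mulr1, mulN1r, mulrN1, add0r, addr0, opprK, mulNr, mulrN, subrr, oppr0, mk2E00, mk2E01, mk2E10, mk2E11).
Ltac fin := simp; first [done | (rewrite addrC; simp; done) | (rewrite subrr; done)].
Section Cont.
Variable R : pzRingType.
Implicit Types (t a b c d : R) (s : seq R).

Definition Mt t : 'M[R]_2 := mk2 0 (-1) 1 t.
Definition Minv t : 'M[R]_2 := mk2 t 1 (-1) 0.
Definition Nt t : 'M[R]_2 := mk2 0 1 (-1) t.
Definition DJ : 'M[R]_2 := mk2 0 1 (-1) 0.
Definition JD : 'M[R]_2 := mk2 0 (-1) 1 0.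


Fixpoint Pm s n : 'M[R]_2 := if n is n'.+1 then Pm s n' *m Mt (nth 0 s n') else 1%:M.
Fixpoint Qm s n : 'M[R]_2 := if n is n'.+1 then Nt (nth 0 s n') *m Qm s n' else 1%:M.
Fixpoint Km s n : 'M[R]_2 := if n is n'.+1 then Minv (nth 0 s n') *m Km s n' else 1%:M.


Lemma MMinv t : Mt t *m Minv t = 1%:M.
Proof. rewrite mulmk2 mk2_1; fin. Qed.
Lemma MinvM t : Minv t *m Mt t = 1%:M.
Proof. rewrite mulmk2 mk2_1; fin. Qed.
Lemma NDJ t : Nt t *m DJ = DJ *m Minv t.
Proof. rewrite !mulmk2; fin. Qed.
Lemma JDDJ : JD *m DJ = 1%:M.
Proof. rewrite mulmk2 mk2_1; fin. Qed.

Lemma PK s n : Pm s n *m Km s n = 1%:M.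
Proof.
elim: n => [|n IH] /=; first by rewrite mul1mx.
by rewrite -mulmxA (mulmxA (Mt _)) MMinv mul1mx IH.
Qed.

Lemma KP s n : Km s n *m Pm s n = 1%:M.
Proof.
elim: n => [|n IH] /=; first by rewrite mul1mx.
by rewrite -mulmxA (mulmxA (Km _ _)) IH mul1mx MinvM.
Qed.

Lemma QK s n : Qm s n = DJ *m Km s n *m JD.
Proof.
elim: n => [|n IH] /=; first by rewrite mulmx1 /DJ /JD mulmk2 mk2_1; fin.
by rewrite IH !mulmxA NDJ.
Qed.

Lemma Q11 s n : Qm s n i1 i1 = Km s n i0 i0.
Proof. rewrite QK (mk2E (Km s n)) /DJ /JD !mulmk2 mk2E11; fin. Qed.
Lemma Q01 s n : Qm s n i0 i1 = - Km s n i1 i0.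
Proof. rewrite QK (mk2E (Km s n)) /DJ /JD !mulmk2 mk2E01; fin. Qed.

Lemma Pe s n : Pm s n i1 i0 = (e_pair s n).1 /\ Pm s n i1 i1 = (e_pair s n).2.
Proof.
elim: n => [|n [IH1 IH2]] /=; first by rewrite mk2_1 mk2E10 mk2E11.
rewrite (mk2E (Pm s n)) /Mt mulmk2 mk2E10 mk2E11 IH1 IH2.
case: (e_pair s n) => x y /=; simp; split=> //; by rewrite addrC.
Qed.

Lemma Psucc s n : Pm s n.+1 i1 i0 = Pm s n i1 i1.
Proof. rewrite /= (mk2E (Pm s n)) /Mt mulmk2 mk2E10; fin. Qed.
Lemma Qsucc s n : Qm s n.+1 i1 i1 = nth 0 s n * Qm s n i1 i1 - Qm s n i0 i1.
Proof. rewrite /= (mk2E (Qm s n)) /Nt mulmk2 mk2E11; fin. Qed.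

Lemma I1 s n : Pm s n i1 i0 * Qm s n i1 i1 = Pm s n i1 i1 * Qm s n i0 i1.
Proof.
have /matrixP/(_ i1 i0) := PK s n; rewrite mulE mk2_1 mk2E10 Q11 Q01 mulrN => /eqP.
by rewrite addr_eq0 => /eqP.
Qed.

Lemma step_eq t a b c d :
  Mt t *m mk2 a b c d *m Nt t =
  mk2 d (- c - d * t) (- b - t * d) (a + (t * c + b * t) + t * d * t).
Proof.
rewrite /Mt /Nt !mulmk2; simp.
by rewrite opprD mulrDl !addrA.
Qed.

End Cont.
Lemma regroup (R : pzRingType) (x y z w u : R) :
  (- x - y * z) * u + u * (- w - z * y) = - ((x * u + u * w) + (y * z * u + u * z * y)).
Proof.
rewrite mulrDl mulrDr !mulNr !mulrN !mulrA -!opprD; congr (- _).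
by rewrite addrACA.
Qed.

Lemma unit_of (R : pzRingType) (x y z : R) : x * y = 1 -> z * x = 1 -> is_unit x.
Proof.
move=> h1 h2; exists y; split => //.
have -> : y = z by rewrite -[z]mulr1 -h1 mulrA h2 mul1r.
done.
Qed.

Lemma gl_right (R : pzRingType) (a00 a01 a10 a11 b00 b01 z : R) :
  b00 * a00 + b01 * a10 = 1 -> b00 * a01 + b01 * a11 = 0 -> a11 * z = 1 ->
  b00 * (a00 - a01 * z * a10) = 1.
Proof.
move=> h1 h2 hz.
have e : b01 * a11 = - (b00 * a01) by apply/eqP; rewrite -addr_eq0 addrC h2.
have hb : b01 = - (b00 * a01 * z) by rewrite -[b01]mulr1 -hz mulrA e mulNr.
by rewrite mulrDr mulrN !mulrA -h1 hb mulNr addrC.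
Qed.

Lemma gl_left (R : pzRingType) (a00 a01 a10 a11 b00 b10 w : R) :
  a00 * b00 + a01 * b10 = 1 -> a10 * b00 + a11 * b10 = 0 -> w * a11 = 1 ->
  (a00 - a01 * w * a10) * b00 = 1.
Proof.
move=> h1 h2 hw.
have e : a11 * b10 = - (a10 * b00) by apply/eqP; rewrite -addr_eq0 addrC h2.
have hb : b10 = - (w * a10 * b00) by rewrite -[b10]mul1r -hw -mulrA e mulrN mulrA.
by rewrite mulrDl mulNr -h1 hb mulrN !mulrA addrC.
Qed.

Lemma gl_left2 (R : pzRingType) (a01 a11 b00 b01 b10 b11 v : R) :
  b00 * a01 + b01 * a11 = 0 -> b10 * a01 + b11 * a11 = 1 -> v * b00 = 1 ->
  (b11 - b10 * v * b01) * a11 = 1.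
Proof.
move=> h1 h2 hv.
have e : b00 * a01 = - (b01 * a11) by apply/eqP; rewrite -addr_eq0 h1.
have ha : a01 = - (v * b01 * a11) by rewrite -[a01]mul1r -hv -mulrA e mulrN mulrA.
by rewrite mulrDl mulNr -h2 ha mulrN !mulrA addrC.
Qed.

Lemma expand3 (S : pzRingType) (x0 y0 z0 : S) :
  (x0 + z0) * y0 * (x0 + z0) = x0 * y0 * x0 + z0 * y0 * z0 + (x0 * y0 * z0 + z0 * y0 * x0).
Proof. by rewrite !mulrDl !mulrDr (addrC (z0*y0*x0) (z0*y0*z0)) addrACA. Qed.

Section Jordan.
Variables (R R' : pzRingType) (al : R -> R') (hal : jordan_hom al).

Lemma jD a b : al (a + b) = al a + al b. Proof. by case: hal. Qed.
Lemma j1 : al 1 = 1. Proof. by case: hal. Qed.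
Lemma jU a b : al (a * b * a) = al a * al b * al a. Proof. by case: hal. Qed.
Lemma j0 : al 0 = 0.
Proof. by apply: (addrI (al 0)); rewrite -jD !addr0. Qed.
Lemma jN a : al (- a) = - al a.
Proof. by apply: (addrI (al a)); rewrite -jD !subrr j0. Qed.
Lemma jB a b : al (a - b) = al a - al b. Proof. by rewrite jD jN. Qed.
Lemma jT x y z : al (x * y * z + z * y * x) = al x * al y * al z + al z * al y * al x.
Proof.
have h := jU (x + z) y.
by move: h; rewrite (expand3 x y z) (jD x z) (expand3 (al x) (al y) (al z)) (jD (x*y*x + z*y*z)) (jD (x*y*x)) !jU => /addrI.
Qed.
End Jordan.
Section Machine.
Variables (R R' : pzRingType) (al : R -> R') (hal : jordan_hom al).

Definition compat (X : 'M[R]_2) (Y : 'M[R']_2) :=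
  [/\ al (X i0 i0) = Y i0 i0, al (X i1 i1) = Y i1 i1,
   forall u, al (X i0 i1 * u + u * X i1 i0) = Y i0 i1 * al u + al u * Y i1 i0 &
   forall u, al (X i1 i0 * u + u * X i0 i1) = Y i1 i0 * al u + al u * Y i0 i1].

Lemma compat_step t X Y : compat X Y ->
  compat (Mt t *m X *m Nt t) (Mt (al t) *m Y *m Nt (al t)).
Proof.
rewrite (mk2E X) (mk2E Y) !step_eq /compat !mk2E00 !mk2E01 !mk2E10 !mk2E11.
move: (X i0 i0) (X i0 i1) (X i1 i0) (X i1 i1) (Y i0 i0) (Y i0 i1) (Y i1 i0) (Y i1 i1).
move=> a b c d a' b' c' d' [ha hd hL hL']; split.
- exact: hd.
- rewrite (jD hal (a + _)) (jD hal a) ha (jU hal) hd (addrC (t * c)) hL.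
  by rewrite (addrC (b' * _)).
- move=> u; rewrite !regroup (jN hal) (jD hal) hL' (jT hal) hd.
  done.
- move=> u; rewrite !regroup (jN hal) (jD hal) hL (jT hal) hd.
  done.
Qed.

Lemma nth_map0 s i : nth 0 (map al s) i = al (nth 0 s i).
Proof.
case: (ltnP i (size s)) => h; first by rewrite (nth_map 0).
by rewrite !nth_default ?size_map // (j0 hal).
Qed.

Lemma machine s n X Y : compat X Y ->
  compat (Pm s n *m X *m Qm s n) (Pm (map al s) n *m Y *m Qm (map al s) n).
Proof.
elim: n X Y => [|n IH] X Y h /=; first by rewrite !mul1mx !mulmx1.
have E : forall (S : pzRingType) (P M X N Q : 'M[S]_2), P *m M *m X *m (N *m Q) = P *m (M *m X *m N) *m Q.
  by move=> S P M X0 N Q; rewrite !mulmxA.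
rewrite !E nth_map0; apply: IH; exact: compat_step.
Qed.

Lemma entry11 (S : pzRingType) (P Q : 'M[S]_2) x :
  (P *m mk2 0 0 0 x *m Q) i1 i1 = P i1 i1 * x * Q i1 i1.
Proof. rewrite !mulE; simp; done. Qed.

Lemma Ulem s n x :
  al (Pm s n i1 i1 * x * Qm s n i1 i1) =
  Pm (map al s) n i1 i1 * al x * Qm (map al s) n i1 i1.
Proof.
have h : compat (mk2 0 0 0 x) (mk2 0 0 0 (al x)).
  split; rewrite ?mk2E00 ?mk2E01 ?mk2E10 ?mk2E11 ?(j0 hal) //;
  by move=> u; simp; rewrite (j0 hal).
by case: (machine s n h) => _ + _ _; rewrite !entry11.
Qed.

Lemma Wlem s n :
  al (Pm s n i1 i0 * Qm s n i1 i1) = Pm (map al s) n i1 i0 * Qm (map al s) n i1 i1.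
Proof.
elim: n => [|n IH].
  by rewrite /= !mk2_1 !mk2E10 !mul0r (j0 hal).
rewrite !Psucc !Qsucc nth_map0 !mulrBr -!I1 (jB hal) IH !mulrA Ulem.
done.
Qed.
End Machine.
Lemma mxent (S : pzRingType) (A B : 'M[S]_2) i j : A *m B = 1%:M ->
  A i i0 * B i0 j + A i i1 * B i1 j = (1%:M : 'M[S]_2) i j.
Proof. by move=> h; rewrite -mulE h. Qed.

Lemma one00 (S : pzRingType) : (1%:M : 'M[S]_2) i0 i0 = 1. Proof. by rewrite mk2_1 mk2E00. Qed.
Lemma one11 (S : pzRingType) : (1%:M : 'M[S]_2) i1 i1 = 1. Proof. by rewrite mk2_1 mk2E11. Qed.
Lemma one01 (S : pzRingType) : (1%:M : 'M[S]_2) i0 i1 = 0. Proof. by rewrite mk2_1 mk2E01. Qed.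
Lemma one10 (S : pzRingType) : (1%:M : 'M[S]_2) i1 i0 = 0. Proof. by rewrite mk2_1 mk2E10. Qed.

Theorem theorem3p5 (R R' : pzRingType) (alpha : R -> R')
  (halpha : jordan_hom alpha) (n : nat) (T : seq R) (hT : size T = n) :
  (is_unit (e_poly T n) -> is_unit (e_poly (map alpha T) n)) /\
  (is_unit (e_poly T n) -> e_poly_pred T n = 0 ->
     e_poly_pred (map alpha T) n = 0).
Proof.
set T' := map alpha T.
have eq1 : e_poly T n = Pm T n i1 i1 by case: (Pe T n).
have eq1' : e_poly T' n = Pm T' n i1 i1 by case: (Pe T' n).
have eq0 : e_poly_pred T n = Pm T n i1 i0 by case: (Pe T n).
have eq0' : e_poly_pred T' n = Pm T' n i1 i0 by case: (Pe T' n).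
have key : is_unit (e_poly T n) ->
  exists z, Pm T' n i1 i1 * z = 1 /\ exists w, w * Pm T' n i1 i1 = 1.
  rewrite eq1 => -[u [qu uq]].
  have k00 := mxent i0 i0 (KP T n); have k01 := mxent i0 i1 (KP T n).
  have p00 := mxent i0 i0 (PK T n); have p10 := mxent i1 i0 (PK T n).
  rewrite one00 in k00 p00; rewrite one01 in k01; rewrite one10 in p10.
  have dr := gl_right k00 k01 qu.
  have dl := gl_left p00 p10 uq.
  have [v [dv vd]] := unit_of dr dl.
  have e1 : Pm T n i1 i1 * (u * v) * Qm T n i1 i1 = 1.
    by rewrite Q11 mulrA qu mul1r vd.
  have := Ulem halpha T n (u * v); rewrite e1 (j1 halpha) Q11 => e2.
  exists (alpha (u * v) * Km T' n i0 i0); split; first by rewrite mulrA e2.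
  have k01' := mxent i0 i1 (KP T' n); have k11' := mxent i1 i1 (KP T' n).
  rewrite one01 in k01'; rewrite one11 in k11'.
  have hv : (Pm T' n i1 i1 * alpha (u * v)) * Km T' n i0 i0 = 1 by rewrite e2.
  exists (Km T' n i1 i1 - Km T' n i1 i0 * (Pm T' n i1 i1 * alpha (u * v)) * Km T' n i0 i1).
  exact: gl_left2 k01' k11' hv.
split.
  move=> hu; have [z [hz [w hw]]] := key hu.
  by rewrite eq1'; exact: unit_of hz hw.
move=> hu hp; have [z [hz _]] := key hu.
have k00' := mxent i0 i0 (KP T' n); have k01' := mxent i0 i1 (KP T' n).
rewrite one00 in k00'; rewrite one01 in k01'.
have dr := gl_right k00' k01' hz.
have := Wlem halpha T n; rewrite -eq0 hp mul0r (j0 halpha) Q11 => e.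
by rewrite eq0' -[Pm T' n i1 i0]mulr1 -dr mulrA -e mul0r.
Qed.
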